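(* Let $(A,\mathit{Con},\mid\!\sim)$ be an abstract nonmonotonic system and $(B,\mathit{Con}^*,\Delta)$ the normal default structure constructed from it as described in the context. If $P,Q\in\mathit{Con}$ satisfy $Q\subseteq P\subseteq\widetilde{Q}$, then $\widetilde{Q}\cup\{[Q]\}$ is an extension of $P$ in $(B,\mathit{Con}^*,\Delta)$.
   Context: An abstract nonmonotonic system is a triple $(A,\mathit{Con},\mid\!\sim)$ where $\mathit{Con}$ is a collection of finite subsets of $A$ and $\mid\!\sim\ \subseteq\mathit{Con}\times\mathit{Con}$, satisfying: (1) $X\subseteq Y\in\mathit{Con}\Rightarrow X\in\mathit{Con}$; (2) $a\in A\Rightarrow\{a\}\in\mathit{Con}$; (3) $X\mid\!\sim T\Rightarrow X\cup T\in\mathit{Con}$; (4) $Y\subseteq X\Rightarrow X\mid\!\sim Y$; (5) $X\mid\!\sim T$ and $T\cup X\mid\!\sim Y$ imply $X\mid\!\sim Y$; (6) $X\mid\!\sim Y$ and $X\mid\!\sim Z$ imply $X\mid\!\sim Y\cup Z$. Write $X\mid\!\sim a$ for $X\mid\!\sim\{a\}$, and $\widetilde{X}:=\{t\mid X\mid\!\sim\{t\}\}$. Construction: $B:=A\cup\{[X]\mid X\in\mathit{Con}\}$, where $[X]$ are new pairwise distinct tokens. $\Delta:=\{\frac{X:[X]}{[X]}\mid X\in\mathit{Con}\}\cup\{\frac{\{[X]\}:a}{a}\mid X\mid\!\sim a,\ a\notin X\}$. For finite $W\subseteq B$, $W\in\mathit{Con}^*$ iff (i) $W\cap A\in\mathit{Con}$;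 (ii) $W$ contains at most one token of the form $[X]$; (iii) if $[X]\in W$ then $X\mid\!\sim W\setminus\{[X]\}$. An arbitrary subset of $B$ is consistent if all its finite subsets are in $\mathit{Con}^*$. Extensions in $(B,\mathit{Con}^*,\Delta)$: for consistent $x\subseteq B$ and $S\subseteq B$, $\phi(x,S,0)=x$, $\phi(x,S,i+1)=\phi(x,S,i)\cup\{a\mid\frac{X:a}{a}\in\Delta,\ X\subseteq\phi(x,S,i),\ \{a\}\cup S\text{ consistent}\}$, $\Phi(x,S)=\bigcup_i\phi(x,S,i)$; $y$ is an extension of $x$ if $\Phi(x,y)=y$. *)

(* Defs.v *)
From Stdlib Require Import List.

Definition set (T : Type) := T -> Prop.
Definition subset {T} (X Y : set T) : Prop := forall x, X x -> Y x.
Definition union {T} (X Y : set T) : set T := fun x => X x \/ Y x.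
Definition single {T} (a : T) : set T := fun x => x = a.
Definition finite {T} (X : set T) : Prop :=
  exists l : list T, forall x, X x -> In x l.

Record ANS (A : Type) := {
  Con : set A -> Prop;
  nm  : set A -> set A -> Prop;
  Con_finite : forall X, Con X -> finite X;
  nm_Con : forall X Y, nm X Y -> Con X /\ Con Y;
  ax1 : forall X Y, subset X Y -> Con Y -> Con X;
  ax2 : forall a, Con (single a);
  ax3 : forall X T, nm X T -> Con (union X T);
  ax4 : forall X Y, Con X -> subset Y X -> nm X Y;
  ax5 : forall X T Y, nm X T -> nm (union T X) Y -> nm X Y;
  ax6 : forall X Y Z, nm X Y -> nm X Z -> nm X (union Y Z)
}.
Arguments Con {A} _ _.
Arguments nm {A} _ _ _.

Section Construction.
Context {A : Type} (N : ANS A).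

Definition tilde (X : set A) : set A := fun t => nm N X (single t).

(* B = A ∪ { [X] | X ∈ Con } *)
Definition B : Type := (A + { X : set A | Con N X })%type.
Definition token (X : set A) (h : Con N X) : B := inr (exist _ X h).

Definition partA (W : set B) : set A := fun a => W (inl a).
Definition liftA (X : set A) : set B :=
  fun b => match b with inl a => X a | inr _ => False end.

(* Con* on finite subsets of B.  Condition (iii): since W contains at most
   one token, W \ {[X]} = W ∩ A. *)
Definition ConStar (W : set B) : Prop :=
  finite W /\
  Con N (partA W) /\
  (forall X Y, W (inr X) -> W (inr Y) -> X = Y) /\
  (forall X, W (inr X) -> nm N (proj1_sig X) (partA W)).

Definition consistent (S : set B) : Prop :=
  forall W, finite W -> subset W S -> ConStar W.

(* Normal defaults  X : b / b, given as (prerequisite, conclusion). *)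
Definition Delta (X : set B) (b : B) : Prop :=
  (exists Y (h : Con N Y), X = liftA Y /\ b = token Y h) \/
  (exists Y (h : Con N Y) a, nm N Y (single a) /\ ~ Y a /\
      X = single (token Y h) /\ b = inl a).

Fixpoint phi (x S : set B) (i : nat) : set B :=
  match i with
  | 0 => x
  | Datatypes.S i' => fun b => phi x S i' b \/
      exists X, Delta X b /\ subset X (phi x S i') /\ consistent (union (single b) S)
  end.

Definition Phi (x S : set B) : set B := fun b => exists i, phi x S i b.

Definition extension (x y : set B) : Prop :=
  consistent x /\ forall b, Phi x y b <-> y b.

End Construction.

(* Main.v *)
Require Import Defs.
From Stdlib Require Import List Classical FunctionalExtensionality PropExtensionality ProofIrrelevance.

Lemma set_ext {T} (X Y : set T) : (forall x, X x <-> Y x) -> X = Y.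
Proof.
  intro H; apply functional_extensionality; intro x; apply propositional_extensionality; auto.
Qed.

Lemma nm_fin (A : Type) (N : ANS A) (Q : set A) (HQ : Con N Q) :
  forall l (Z : set A), (forall x, Z x -> In x l) -> subset Z (tilde N Q) -> nm N Q Z.
Proof.
  induction l as [|x l IH]; intros Z HZ Ht.
  - apply ax4; auto. intros t Zt. destruct (HZ t Zt).
  - assert (E : Z = union (fun t => Z t /\ t = x) (fun t => Z t /\ t <> x)).
    { apply set_ext; intro t; unfold union; split.
      - intro z; destruct (classic (t = x)); auto.
      - intros [[? ?]|[? ?]]; auto. }
    rewrite E; apply ax6.
    + destruct (classic (Z x)) as [Zx|nZx].
      * replace (fun t => Z t /\ t = x) with (single x).
        { apply Ht; auto. }
        apply set_ext; intro t; unfold single; split.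
        -- intro; subst; auto.
        -- intros [_ ?]; auto.
      * apply ax4; auto. intros t [Zt e]; subst; contradiction.
    + apply IH.
      * intros t [Zt ne]. destruct (HZ t Zt); auto. congruence.
      * intros t [Zt _]; auto.
Qed.

Lemma partA_fin (A : Type) (N : ANS A) (W : set (B N)) (l : list (B N)) :
  (forall x, W x -> In x l) ->
  forall a, partA N W a -> In a (flat_map (fun b : B N => match b with inl a => a :: nil | inr _ => nil end) l).
Proof.
  intros Hl a Wa. apply in_flat_map. exists (inl a). split; [apply Hl; exact Wa| simpl; auto].
Qed.

Theorem lemma3 (A : Type) (N : ANS A) (P Q : set A)
  (HP : Con N P) (HQ : Con N Q)
  (HQP : subset Q P) (HPQ : subset P (tilde N Q)) :
  extension N (liftA N P)
    (fun b : B N => match b with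
                    | inl t => tilde N Q t
                    | inr X => proj1_sig X = Q
                    end).
Proof.
  match goal with |- extension _ _ ?f => set (y := f) end.
  assert (Hcy : consistent N y).
  { intros W Wf Wsub.
    assert (Hnm : nm N Q (partA N W)).
    { destruct Wf as [l Hl].
      apply (nm_fin A N Q HQ _ _ (partA_fin A N W l Hl)).
      intros a Wa. exact (Wsub _ Wa). }
    split; [exact Wf|]. split; [|split].
    - apply (ax1 _ N _ (union Q (partA N W))).
      + intros a Wa; right; auto.
      + apply ax3; auto.
    - intros [X hX] [Y hY] WX WY.
      pose proof (Wsub _ WX) as e1; pose proof (Wsub _ WY) as e2; simpl in e1, e2.
      subst X Y. f_equal. apply proof_irrelevance.
    - intros X WX. pose proof (Wsub _ WX) as e1; simpl in e1. rewrite e1; exact Hnm. }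
  assert (Hcb : forall b, y b -> consistent N (union (single b) y)).
  { intros b yb W Wf Wsub. apply Hcy; auto. intros c Wc. destruct (Wsub c Wc) as [e|e]; auto.
    unfold single in e; subst; auto. }
  split.
  - intros W Wf Wsub. split; [exact Wf|]. split; [|split].
    + apply (ax1 _ N _ P); auto. intros a Wa; exact (Wsub _ Wa).
    + intros X Y WX; destruct (Wsub _ WX).
    + intros X WX; destruct (Wsub _ WX).
  - intro b; split.
    + intros [i Hi]. revert b Hi. induction i as [|i IH]; intros b Hi.
      * destruct b as [a|X]; simpl in Hi; [apply HPQ; exact Hi| destruct Hi].
      * destruct Hi as [Hi|[X [HD [Hsub Hc]]]]; [apply IH; exact Hi|].
        destruct HD as [[Y [h [eX eb]]]|[Y [h [a [Hya [nYa [eX eb]]]]]]].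
        -- subst b. simpl.
           assert (CS : ConStar N (union (single (token N Y h)) (single (token N Q HQ)))).
           { apply Hc.
             - exists (token N Y h :: token N Q HQ :: nil). intros x [e|e]; unfold single in e; subst; simpl; auto.
             - intros x [e|e]; [left; exact e| right]. unfold single in e; subst; simpl; reflexivity. }
           destruct CS as [_ [_ [U _]]].
           assert (E := U (exist _ Y h) (exist _ Q HQ) (or_introl eq_refl) (or_intror eq_refl)).
           apply (f_equal (@proj1_sig _ _)) in E. exact E.
        -- subst b X. assert (Ht := IH _ (Hsub _ eq_refl)). simpl in Ht. subst Y. exact Hya.
    + intro yb.
      assert (Htok : forall h, phi N (liftA N P) y 1 (token N Q h)).
      { intro h. simpl. right. exists (liftA N Q). split; [|split].
        - left. exists Q, h. auto.
        - intros [a|X] Ha; simpl in *; auto.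
        - apply Hcb. reflexivity. }
      destruct b as [a|[X h]].
      * destruct (classic (Q a)) as [Qa|nQa].
        -- exists 0. simpl. auto.
        -- exists 2. simpl. right. exists (single (token N Q HQ)). split; [|split].
           ++ right. exists Q, HQ, a. auto.
           ++ intros x e; unfold single in e; subst. apply Htok.
           ++ apply Hcb; auto.
      * simpl in yb. subst X. exists 1. apply Htok.
Qed.
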